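(* Let a binary-payoff collective choice problem (as in the context) satisfy the standing assumptions, and suppose its signals convey only aggregate news. Then, whatever the polarization ratio $v_\ell/v_w$, the collective choice problem is advantageously correlated, i.e. $V^G(\kappa)>0$ for every $\kappa\in\{1,\dots,\tau\}$.
   Context: Setting: $n\ge3$ odd, $\tau=(n-1)/2$; voters vote for $p^*$ or $p_*$, a policy wins iff it gets more than $\tau$ votes. A state specifies a payoff profile $V=(V_1,\dots,V_n)$ and a signal profile $S\in\mathcal S^n$, $\mathcal S=\{s^0,\dots,s^K\}$, $\mathcal M=\{s^1,\dots,s^K\}$ informative; $P$ is a probability on the finite state space, and voter $i$ privately observes $S_i$. $V_i^d$ is $i$'s payoff from $p^*$ minus that from $p_*$; $V_i^d(E)=E[V_i^d\mid E]$ for non-null $E$. Binary payoffs: $V_i^d\in\{v_w,-v_\ell\}$, $v_w,v_\ell>0$; $W_i=\{V_i^d>0\}$, $W$ = number of winners. $s^k\in\mathcal M$ is good news if $V_i^d(S_i=s^k)>0$, bad news if $<0$; $G,B$ count voters with good/bad news. Standing assumptions: $V_i^d(\text{whole space})>0$; $P$ invariant under permutations of voters; if $s_i=s^0$ then $P(V=v,S=s)=P(V=v,S_{-i}=s_{-i})P(S_i=s^0)$; if $s_i\ne s^0$ then $V_i^d(S=s)>0$ iff $V_i^d(S_i=s_i)>0$; $V_i^d(E)\ne0$ for non-null $E$; $P(B\ge1)>0$, $P(G\ge\tau)>0$. Signals convey only aggregate news if $P(V=v\mid S=s,W=w)=P(V=v\mid W=w)$ for every payoff profile $v$, signal profile $s$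 and $w$ with $P(W=w)>0$ (and $P(S=s,W=w)>0$). $V^G(\kappa)=V_i^d(G=\kappa,B=0,S_i=s^0)$; advantageous correlation means $V^G(\kappa)>0$ for all $\kappa\in\{1,\dots,\tau\}$. *)

(* Defs.v *)
From mathcomp Require Import all_boot all_order all_algebra all_fingroup.
Set Implicit Arguments. Unset Strict Implicit. Unset Printing Implicit Defensive.
Import Order.TTheory GRing.Theory Num.Theory.
Local Open Scope ring_scope.

Section Model.
Variables (R : realFieldType) (Omega : finType) (n K : nat).
(* V w i = (payoff of voter i from p*, payoff of voter i from p_* ) in state w.
   S w i = signal of voter i in state w; ord0 is the uninformative s^0. *)
Variable P : Omega -> R.
Variable V : Omega -> {ffun 'I_n -> R * R}.
Variable S : Omega -> {ffun 'I_n -> 'I_K.+1}.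

Definition is_prob : Prop := (forall w, 0 <= P w) /\ \sum_w P w = 1.

Definition prob (E : pred Omega) : R := \sum_(w | E w) P w.
Definition cprob (A B : pred Omega) : R :=
  prob (fun w => A w && B w) / prob B.
(* conditional expectation E[f | E] (only meaningful for non-null E) *)
Definition cexp (f : Omega -> R) (E : pred Omega) : R :=
  (\sum_(w | E w) P w * f w) / prob E.

Definition s0 : 'I_K.+1 := ord0.

Definition Vd (i : 'I_n) (w : Omega) : R := (V w i).1 - (V w i).2.
Definition VdE (i : 'I_n) (E : pred Omega) : R := cexp (Vd i) E.

Definition ev_S (s : {ffun 'I_n -> 'I_K.+1}) : pred Omega := fun w => S w == s.
Definition ev_Si (i : 'I_n) (k : 'I_K.+1) : pred Omega := fun w => S w i == k.
Definition ev_VS (v : {ffun 'I_n -> R * R}) (s : {ffun 'I_n -> 'I_K.+1}) : pred Omega := fun w => (V w == v) && (S w == s).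
Definition ev_V_Smi (v : {ffun 'I_n -> R * R}) (s : {ffun 'I_n -> 'I_K.+1}) (i : 'I_n) : pred Omega :=
  fun w => (V w == v) && [forall j, (j != i) ==> (S w j == s j)].

Definition good_news (i : 'I_n) (k : 'I_K.+1) : bool :=
  (k != s0) && (0 < VdE i (ev_Si i k)).
Definition bad_news (i : 'I_n) (k : 'I_K.+1) : bool :=
  (k != s0) && (VdE i (ev_Si i k) < 0).

Definition Gc (w : Omega) : nat := #|[set i | good_news i (S w i)]|.
Definition Bc (w : Omega) : nat := #|[set i | bad_news i (S w i)]|.
Definition Wc (w : Omega) : nat := #|[set i | 0 < Vd i w]|.

Definition binary_payoffs (vw vl : R) : Prop :=
  0 < vw /\ 0 < vl /\ forall w i, Vd i w = vw \/ Vd i w = - vl.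

Definition standing_assumptions : Prop :=
      (forall i, 0 < VdE i predT) /\
      (forall (sigma : {perm 'I_n}) (v : {ffun 'I_n -> R * R})
          (s : {ffun 'I_n -> 'I_K.+1}),
          prob (ev_VS v s) =
          prob (ev_VS [ffun i => v (sigma i)] [ffun i => s (sigma i)])) /\
      (* s^0 is independent of everything else *)
      (forall i (v : {ffun 'I_n -> R * R}) (s : {ffun 'I_n -> 'I_K.+1}),
          s i = s0 ->
          prob (ev_VS v s) = prob (ev_V_Smi v s i) * prob (ev_Si i s0)) /\
      (forall i (s : {ffun 'I_n -> 'I_K.+1}), s i != s0 -> 0 < prob (ev_S s) ->
          (0 < VdE i (ev_S s) <-> 0 < VdE i (ev_Si i (s i)))) /\
      (forall i (F : {ffun 'I_n -> R * R} -> {ffun 'I_n -> 'I_K.+1} -> bool),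
          0 < prob (fun w => F (V w) (S w)) ->
          VdE i (fun w => F (V w) (S w)) != 0) /\
      0 < prob (fun w => 1 <= Bc w)%N /\
      0 < prob (fun w => (n.-1)./2 <= Gc w)%N.

Definition aggregate_news : Prop :=
  forall (v : {ffun 'I_n -> R * R}) (s : {ffun 'I_n -> 'I_K.+1}) (m : nat),
    0 < prob (fun w => Wc w == m) ->
    0 < prob (fun w => (S w == s) && (Wc w == m)) ->
    cprob (fun w => V w == v) (fun w => (S w == s) && (Wc w == m)) =
    cprob (fun w => V w == v) (fun w => Wc w == m).

Definition ev_G (i : 'I_n) (kappa : nat) : pred Omega :=
  fun w => [&& Gc w == kappa, Bc w == 0%N & S w i == s0].
Definition VG (i : 'I_n) (kappa : nat) : R := VdE i (ev_G i kappa).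

End Model.

(* Main.v *)
Require Import Defs.
From mathcomp Require Import all_boot all_order all_algebra all_fingroup.
From mathcomp Require Import ring.
Set Implicit Arguments. Unset Strict Implicit. Unset Printing Implicit Defensive.
Import Order.TTheory GRing.Theory Num.Theory.
Local Open Scope ring_scope.

Section Helpers.
Variables (R : realFieldType) (Omega : finType) (n K : nat).
Variable P : Omega -> R.
Variable V : Omega -> {ffun 'I_n -> R * R}.
Variable S : Omega -> {ffun 'I_n -> 'I_K.+1}.
Hypothesis P_ge0 : forall w, 0 <= P w.

Local Notation VT := {ffun 'I_n -> R * R}.

Lemma sum_pred1_seq (T : eqType) (U : seq T) (x : T) (F : T -> R) :
  uniq U -> x \in U -> \sum_(v <- U | v == x) F v = F x.
Proof.
by move=> uU xU; rewrite -big_filter (filter_pred1_uniq uU xU) big_seq1.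
Qed.

Lemma sum_by_V (U : seq VT) (A : pred Omega) (g : VT -> R) :
  uniq U -> (forall w, V w \in U) ->
  \sum_(w | A w) P w * g (V w) =
  \sum_(v <- U) g v * prob P (fun w => A w && (V w == v)).
Proof.
move=> uU VU.
under [RHS]eq_bigr => v _ do rewrite /prob big_distrr /= big_mkcondr.
rewrite [RHS]exchange_big /= big_mkcond /=.
rewrite [RHS]big_mkcond; apply: eq_bigr => w _.
case: (A w) => //.
rewrite -big_mkcond /=.
transitivity (\sum_(v <- U | v == V w) g v * P w).
  by rewrite sum_pred1_seq // mulrC.
by apply: eq_bigl => v; rewrite eq_sym.
Qed.


Definition Vdv (i : 'I_n) (v : VT) : R := (v i).1 - (v i).2.
Definition Wv (v : VT) : nat := #|[set k | 0 < Vdv k v]|.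
Definition permv (s : {perm 'I_n}) (v : VT) : VT := [ffun k => v (s k)].
Definition mu (v : VT) : R := prob P (fun w => V w == v).

Hypothesis exch : forall (sigma : {perm 'I_n}) (v : {ffun 'I_n -> R * R})
          (s : {ffun 'I_n -> 'I_K.+1}),
          prob P (ev_VS V S v s) =
          prob P (ev_VS V S [ffun i => v (sigma i)] [ffun i => s (sigma i)]).

Lemma mu_sum v : mu v = \sum_s prob P (ev_VS V S v s).
Proof.
rewrite /mu /prob (partition_big S predT) //.
Qed.

Lemma mu_perm (sigma : {perm 'I_n}) v : mu v = mu (permv sigma v).
Proof.
rewrite !mu_sum.
under eq_bigr => s _ do rewrite (exch sigma).
have inj : injective (fun s : {ffun 'I_n -> 'I_K.+1} => [ffun k => s (sigma k)]).
  move=> s1 s2 /ffunP H; apply/ffunP => k.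
  by have := H (sigma^-1 k)%g; rewrite !ffunE permKV.
by rewrite [RHS](reindex_inj inj).
Qed.

Lemma Wv_perm sigma v : Wv (permv sigma v) = Wv v.
Proof.
rewrite /Wv.
have -> : [set k | 0 < Vdv k (permv sigma v)] = sigma @^-1: [set k | 0 < Vdv k v].
  by apply/setP => k; rewrite !inE /Vdv /permv ffunE.
by rewrite card_preimset //; apply: perm_inj.
Qed.

Lemma exch_A (i j : 'I_n) (m : nat) :
  \sum_(w | Wc V w == m) P w * Vd V i w = \sum_(w | Wc V w == m) P w * Vd V j w.
Proof.
have fK : forall v, permv (tperm i j) (permv (tperm i j) v) = v.
  by move=> v; apply/ffunP => k; rewrite !ffunE tpermK.
have fg : forall v, Wv (permv (tperm i j) v) = Wv v /\ Vdv i (permv (tperm i j) v) = Vdv j v.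
  by move=> v; rewrite Wv_perm /Vdv /permv ffunE tpermL.
move: (permv (tperm i j)) fK (@mu_perm (tperm i j)) fg => f fK muf fg.
have finj : injective f by apply: (can_inj fK).
pose L := map V (enum Omega).
pose U := undup (L ++ map f L).
have uU : uniq U by apply: undup_uniq.
have VU : forall w, V w \in U.
  by move=> w; rewrite mem_undup mem_cat map_f ?mem_enum.
have fU1 : forall y, y \in U -> f y \in U.
  move=> y; rewrite !mem_undup !mem_cat => /orP [yL|/mapP [z zL ->]].
    by rewrite map_f ?orbT.
  by rewrite fK zL.
have pU : perm_eq U (map f U).
  apply: uniq_perm => //; first by rewrite (map_inj_uniq finj).
  move=> x; apply/idP/mapP => [xU|[z zU ->]]; last exact: fU1.
  by exists (f x); rewrite ?fK // fU1.
have H : forall k, \sum_(w | Wc V w == m) P w * Vd V k w =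
   \sum_(v <- U) ((Wv v == m)%:R * Vdv k v) * mu v.
  move=> k; rewrite -(@sum_by_V U predT) // big_mkcond /=.
  apply: eq_bigr => w _.
  by rewrite /Wc /Wv /Vdv /Vd; case: eqP => _; rewrite ?mul1r ?mul0r ?mulr0.
rewrite !H (perm_big _ pU) big_map.
apply: eq_bigr => v _.
by have [-> ->] := fg v; rewrite -muf.
Qed.


Definition Am (k : 'I_n) (m : nat) := \sum_(w | Wc V w == m) P w * Vd V k w.
Definition pW (m : nat) := prob P (fun w => Wc V w == m).
Definition pSW s (m : nat) := prob P (fun w => (S w == s) && (Wc V w == m)).

Lemma prob_ge0 (E : pred Omega) : 0 <= prob P E.
Proof. by apply: sumr_ge0 => w _; apply: P_ge0. Qed.

Lemma prob_le (E F : pred Omega) : (forall w, E w -> F w) -> prob P E <= prob P F.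
Proof.
move=> EF; rewrite /prob [X in _ <= X](bigID E) /=.
have -> : \sum_(w | F w && E w) P w = \sum_(w | E w) P w.
  by apply: eq_bigl => w; case: (boolP (E w)) => Ew; rewrite ?andbT ?andbF ?EF.
by rewrite lerDl; apply: sumr_ge0 => w _; apply: P_ge0.
Qed.

Lemma decomp (agg : aggregate_news P V S) k s :
  \sum_(w | S w == s) P w * Vd V k w =
  \sum_(m < n.+1) (if 0 < pSW s m then pSW s m / pW m else 0) * Am k m.
Proof.
rewrite (partition_big (fun w => (inord (Wc V w) : 'I_n.+1)) predT) //=.
apply: eq_bigr => m _.
have Wle : forall w, (Wc V w < n.+1)%N.
  by move=> w; rewrite ltnS /Wc; apply: leq_trans (max_card _) _; rewrite card_ord.
have -> : \sum_(w | (S w == s) && (inord (Wc V w) == m)) P w * Vd V k w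
        = \sum_(w | (S w == s) && (Wc V w == m)) P w * Vd V k w.
  by apply: eq_bigl => w; rewrite -(inj_eq val_inj) /= inordK.
case: ifP => pos; last first.
  have z : pSW s m = 0.
    by apply/eqP; rewrite eq_le prob_ge0 andbT leNgt pos.
  move/psumr_eq0P: z => z; rewrite mul0r big1 // => w Hw.
  by rewrite z ?mul0r // => w' _; apply: P_ge0.
have posW : 0 < pW m.
  by apply: lt_le_trans pos (prob_le _) => w /andP [].
pose U := undup (map V (enum Omega)).
have uU : uniq U by apply: undup_uniq.
have VU : forall w, V w \in U by move=> w; rewrite mem_undup map_f ?mem_enum.
rewrite (@sum_by_V U _ (Vdv k)) // /Am (@sum_by_V U _ (Vdv k)) // big_distrr /=.
apply: eq_bigr => v _.
have := agg v s m posW pos; rewrite /cprob /pSW /pW.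
set a := prob P _; set b := prob P _; set c := prob P _; set d := prob P _.
have -> : prob P (fun w => (S w == s) && (Wc V w == m) && (V w == v)) = a.
  by apply: eq_bigl => w; rewrite andbC.
have -> : prob P (fun w => (Wc V w == m) && (V w == v)) = c.
  by apply: eq_bigl => w; rewrite andbC.
move=> e; have -> : a = c / d * b by rewrite -e divfK // lt0r_neq0.
rewrite mulrCA; ring.
Qed.


Lemma sym_S (agg : aggregate_news P V S) i j s :
  \sum_(w | S w == s) P w * Vd V i w = \sum_(w | S w == s) P w * Vd V j w.
Proof.
rewrite !decomp //; apply: eq_bigr => m _; by rewrite /Am (exch_A i j).
Qed.

End Helpers.

Theorem proposition6 (R : realFieldType) (Omega : finType) (n K : nat)
  (P : Omega -> R) (V : Omega -> {ffun 'I_n -> R * R})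
  (S : Omega -> {ffun 'I_n -> 'I_K.+1}) (vw vl : R) :
  odd n -> (3 <= n)%N ->
  is_prob P ->
  binary_payoffs V vw vl ->
  standing_assumptions P V S ->
  aggregate_news P V S ->
  forall (i : 'I_n) (kappa : nat), (1 <= kappa <= (n.-1)./2)%N ->
    0 < prob P (ev_G P V S i kappa) ->
    0 < VG P V S i kappa.
Proof.
move=> _ _ [P_ge0 _] _ [_ [exch [_ [sign _]]]] agg i kappa /andP[k1 _] posE.
have posE0 := posE.
rewrite /VG /VdE /cexp; apply: divr_gt0 posE0.
pose E' (s : {ffun 'I_n -> 'I_K.+1}) :=
  [&& #|[set k | good_news P V S k (s k)]| == kappa,
      #|[set k | bad_news P V S k (s k)]| == 0%N & s i == s0 K].
have part : forall F : Omega -> R,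
    \sum_(w | ev_G P V S i kappa w) F w =
    \sum_(s | E' s) \sum_(w | S w == s) F w.
  move=> F; rewrite (partition_big S E') //.
  apply: eq_bigr => s Es; apply: eq_bigl => w.
  case: (S w =P s) => [Sw|]; rewrite ?andbF // andbT.
  by change (E' (S w) = true); rewrite Sw.
have key : forall t, E' t -> 0 < prob P (ev_S S t) ->
    0 < \sum_(w | S w == t) P w * Vd V i w.
  move=> t /and3P [Gt _ _] pt.
  have : [set k | good_news P V S k (t k)] != set0.
    by rewrite -card_gt0 (eqP Gt).
  case/set0Pn => j; rewrite inE => /andP [tj0 gj].
  have := (sign j t tj0 pt).2 gj; rewrite /VdE /cexp => hj.
  rewrite (sym_S P_ge0 exch agg i j).
  by rewrite -[X in 0 < X](divfK (lt0r_neq0 pt)); apply: mulr_gt0 hj pt.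
have nonneg : forall t, E' t -> 0 <= \sum_(w | S w == t) P w * Vd V i w.
  move=> t Et; case: (ltrP 0 (prob P (ev_S S t))) => pt.
    exact: ltW (key t Et pt).
  have z : prob P (ev_S S t) = 0.
    by apply/eqP; rewrite eq_le pt; apply: sumr_ge0 => w _; apply: P_ge0.
  move/psumr_eq0P: z => z; rewrite big1 // => w Hw.
  by rewrite z ?mul0r // => w' _; apply: P_ge0.
rewrite part.
case: (pickP (fun s => E' s && (0 < prob P (ev_S S s)))) => [s /andP [Es ps]|none].
  rewrite (bigD1 s) //=; apply: lt_le_trans (key s Es ps) _.
  by rewrite lerDl; apply: sumr_ge0 => t /andP [Et _]; apply: nonneg.
move: posE; rewrite /prob part big1 ?ltxx // => s Es.
have := none s; rewrite Es /= => /negbT; rewrite -leNgt => le0.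
by apply/eqP; rewrite eq_le le0; apply: sumr_ge0 => w _; apply: P_ge0.
Qed.
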